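(* For every positive integer $n\neq 2$, there is no continuous bijection from $\mathbb{R}^n$ onto $\mathbb{R}^2$.
   Context: $\mathbb{R}^n$ and $\mathbb{R}^2$ carry their usual Euclidean topologies. *)

(* Defs.v *)
From Stdlib Require Import Reals.
From Stdlib Require Vectors.Fin.
Open Scope R_scope.

Definition Rn (n : nat) : Type := Fin.t n -> R.

Fixpoint fin_sum (n : nat) : (Fin.t n -> R) -> R :=
  match n with
  | O => fun _ => 0
  | S m => fun f => f Fin.F1 + fin_sum m (fun i => f (Fin.FS i))
  end.

Definition euclid_dist (n : nat) (x y : Rn n) : R :=
  sqrt (fin_sum n (fun i => (x i - y i) ^ 2)).

Definition continuous_Rn (n m : nat) (f : Rn n -> Rn m) : Prop :=
  forall x : Rn n, forall eps : R, eps > 0 ->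
    exists delta : R, delta > 0 /\
      forall y : Rn n, euclid_dist n x y < delta ->
        euclid_dist m (f x) (f y) < eps.

Definition bijective_map {A B : Type} (f : A -> B) : Prop :=
  (forall a1 a2, f a1 = f a2 -> a1 = a2) /\ (forall b, exists a, f a = b).

(* Main.v *)
Require Import Defs.
From Stdlib Require Import Reals.
From Stdlib Require Import Reals Lra Lia Psatz ZArith Classical ClassicalEpsilon FunctionalExtensionality.
Open Scope R_scope.

Lemma Rabs_le_inv' x a : Rabs x <= a -> -a <= x <= a.
Proof. unfold Rabs; destruct (Rcase_abs x); lra. Qed.
Lemma Rabs_lt_inv' x a : Rabs x < a -> -a < x < a.
Proof. unfold Rabs; destruct (Rcase_abs x); lra. Qed.

Lemma mono_up (a : nat -> R) : (forall k, a k <= a (S k)) -> forall m k, (m <= k)%nat -> a m <= a k.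
Proof. intros H m k Hmk; induction Hmk; [lra| specialize (H m0); lra]. Qed.

Lemma nested_point (a b : nat -> R) : (forall k, a k <= a (S k)) -> (forall k, b (S k) <= b k) ->
  (forall k, a k <= b k) -> exists l, forall k, a k <= l <= b k.
Proof.
  intros Ha Hb Hab.
  assert (Hb' : forall m k, (m <= k)%nat -> b k <= b m).
  { intros m k Hmk; induction Hmk; [lra| specialize (Hb m0); lra]. }
  assert (Hle : forall m k, a m <= b k).
  { intros m k. destruct (Compare_dec.le_lt_dec m k) as [h|h].
    - pose proof (mono_up a Ha m k h). specialize (Hab k). lra.
    - pose proof (Hb' k m ltac:(lia)). specialize (Hab m). lra. }
  destruct (completeness (fun x => exists k, x = a k)) as [l [Hub Hlub]].
  - exists (b 0%nat). intros x [k ->]. apply Hle.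
  - exists (a 0%nat). eauto.
  - exists l. intros k. split.
    + apply Hub. eauto.
    + apply Hlub. intros x [m ->]. apply Hle.
Qed.

Definition quad (s : R*R*R) (i : nat) : R*R*R :=
  let '(cx,cy,r) := s in
  match i with
  | 0%nat => (cx - r/2, cy - r/2, r/2)
  | 1%nat => (cx + r/2, cy - r/2, r/2)
  | 2%nat => (cx - r/2, cy + r/2, r/2)
  | _ => (cx + r/2, cy + r/2, r/2) end.

Lemma habs x c : c > 0 -> (x = c/2 \/ x = -(c/2)) -> Rabs x = c/2.
Proof. intros Hc [->| ->]; [apply Rabs_right| rewrite Rabs_Ropp; apply Rabs_right]; lra. Qed.

Section Comp.
Variable P : R -> R -> R -> Prop.
Definition Pt (s : R*R*R) := let '(a,b,c) := s in P a b c.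

Definition nxt (s : R*R*R) : R*R*R :=
  if excluded_middle_informative (~ Pt (quad s 0)) then quad s 0 else
  if excluded_middle_informative (~ Pt (quad s 1)) then quad s 1 else
  if excluded_middle_informative (~ Pt (quad s 2)) then quad s 2 else quad s 3.

Lemma nxt_quad s : exists i, nxt s = quad s i.
Proof. unfold nxt. repeat destruct excluded_middle_informative; eauto. Qed.

Hypothesis Hsplit : forall cx cy r, r > 0 -> P (cx - r/2) (cy - r/2) (r/2) -> P (cx + r/2) (cy - r/2) (r/2) ->
  P (cx - r/2) (cy + r/2) (r/2) -> P (cx + r/2) (cy + r/2) (r/2) -> P cx cy r.

Lemma nxt_notP s : (snd s) > 0 -> ~ Pt s -> ~ Pt (nxt s).
Proof.
  destruct s as [[cx cy] r]; simpl; intros Hr HP.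
  unfold nxt. repeat destruct excluded_middle_informative; auto.
  all: try intro H3; exfalso; apply HP; apply Hsplit; auto; apply NNPP; auto.
Qed.

Fixpoint sq (s0 : R*R*R) (k : nat) : R*R*R := match k with 0%nat => s0 | S k => nxt (sq s0 k) end.

Lemma compact2 cx0 cy0 r0 : r0 > 0 ->
 (forall px py, Rabs (px - cx0) <= r0 -> Rabs (py - cy0) <= r0 -> exists rho, rho > 0 /\
    forall cx cy r, 0 < r < rho -> Rabs (px - cx) <= r -> Rabs (py - cy) <= r -> P cx cy r) ->
 P cx0 cy0 r0.
Proof.
  intros Hr0 Hloc. apply NNPP; intro HP.
  set (s := sq (cx0,cy0,r0)).
  assert (Hr : forall k, snd (s k) = r0 * (/2)^k).
  { induction k as [|k IH]; [simpl; ring|]. unfold s in *; simpl. destruct (nxt_quad (sq (cx0, cy0, r0) k)) as [i Hi]. rewrite Hi.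
    destruct (sq (cx0, cy0, r0) k) as [[a b] c]; simpl in *; subst c.
    destruct i as [|[|[|]]]; simpl; field. }
  assert (Hrpos : forall k, snd (s k) > 0).
  { intro k; rewrite Hr; apply Rmult_lt_0_compat; [lra| apply pow_lt; lra]. }
  assert (HnP : forall k, ~ Pt (s k)).
  { induction k as [|k IHk]; [exact HP|]. change (~ Pt (nxt (s k))); apply nxt_notP; [apply Hrpos|exact IHk]. }
  assert (Hstep : forall k, Rabs (fst (fst (s (S k))) - fst (fst (s k))) = snd (s k) / 2 /\
                          Rabs (snd (fst (s (S k))) - snd (fst (s k))) = snd (s k) / 2 /\
                          snd (s (S k)) = snd (s k) / 2).
  { intro k. pose proof (Hrpos k). change (s (S k)) with (nxt (s k)). destruct (nxt_quad (s k)) as [i Hi]. rewrite Hi.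
    remember (s k) as sk. clear Heqsk. destruct sk as [[a b] c]; simpl in *.
    destruct i as [|[|[|]]]; simpl;
    repeat split; try reflexivity; apply habs; auto; first [left; ring | right; ring]. }
  destruct (nested_point (fun k => fst (fst (s k)) - snd (s k)) (fun k => fst (fst (s k)) + snd (s k))) as [px Hpx].
  { intro k; destruct (Hstep k) as [h1 [h2 h3]]; rewrite h3; pose proof (Rabs_le_inv' _ _ (Req_le _ _ h1)); lra. }
  { intro k; destruct (Hstep k) as [h1 [h2 h3]]; rewrite h3; pose proof (Rabs_le_inv' _ _ (Req_le _ _ h1)); lra. }
  { intro k; pose proof (Hrpos k); lra. }
  destruct (nested_point (fun k => snd (fst (s k)) - snd (s k)) (fun k => snd (fst (s k)) + snd (s k))) as [py Hpy].
  { intro k; destruct (Hstep k) as [h1 [h2 h3]]; rewrite h3; pose proof (Rabs_le_inv' _ _ (Req_le _ _ h2)); lra. }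
  { intro k; destruct (Hstep k) as [h1 [h2 h3]]; rewrite h3; pose proof (Rabs_le_inv' _ _ (Req_le _ _ h2)); lra. }
  { intro k; pose proof (Hrpos k); lra. }
  destruct (Hloc px py) as [rho [Hrho Hl]].
  { specialize (Hpx 0%nat); simpl in Hpx; apply Rabs_le; lra. }
  { specialize (Hpy 0%nat); simpl in Hpy; apply Rabs_le; lra. }
  destruct (pow_lt_1_zero (/2) ltac:(rewrite Rabs_right; lra) (rho / r0)) as [N HN].
  { apply Rdiv_lt_0_compat; lra. }
  specialize (HN N (Nat.le_refl _)). rewrite Rabs_right in HN by (apply Rle_ge, pow_le; lra).
  apply (HnP N). specialize (Hpx N); specialize (Hpy N). pose proof (Hr N). pose proof (Hrpos N).
  destruct (s N) as [[a b] c]; simpl in *.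
  apply Hl.
  - split; [lra|]. subst c. apply (Rmult_lt_compat_l r0) in HN; [|lra].
    replace (r0 * (rho / r0)) with rho in HN by (field; lra). lra.
  - apply Rabs_le; lra.
  - apply Rabs_le; lra.
Qed.
End Comp.

Module ZPart.
Local Open Scope Z_scope.

Definition Dq (a b : Z) : Z := match (b - a) mod 4 with 1 => 1 | 3 => -1 | _ => 0 end.
Definition r4 (a : Z) := a = 0 \/ a = 1 \/ a = 2 \/ a = 3.

Ltac brute := repeat match goal with H : r4 _ |- _ => destruct H as [H|[H|[H|H]]]; subst end;
  vm_compute in *; first [reflexivity | congruence | lia | tauto].

Lemma Dq_anti a b : r4 a -> r4 b -> (b - a) mod 4 <> 2 -> Dq b a = - Dq a b.
Proof. intros; brute. Qed.
Lemma Dq_cong a b : r4 a -> r4 b -> (b - a) mod 4 <> 2 -> (Dq a b - (b - a)) mod 4 = 0.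
Proof. intros; brute. Qed.
Lemma Dq_shift a b : r4 a -> r4 b -> Dq ((a+2) mod 4) ((b+2) mod 4) = Dq a b.
Proof. intros; brute. Qed.
Lemma Dq_cyc a b c e : r4 a -> r4 b -> r4 c -> r4 e ->
  (b - a) mod 4 <> 2 -> (c - b) mod 4 <> 2 -> (e - c) mod 4 <> 2 -> (a - e) mod 4 <> 2 ->
  (c - a) mod 4 <> 2 -> (e - b) mod 4 <> 2 ->
  Dq a b + Dq b c + Dq c e + Dq e a = 0.
Proof. intros; brute. Qed.


Fixpoint zsum (n : nat) (f : nat -> Z) : Z := match n with O => 0 | S n => zsum n f + f n end.

Lemma zsum_ext n f g : (forall i, (i < n)%nat -> f i = g i) -> zsum n f = zsum n g.
Proof. induction n; simpl; intros H; auto. rewrite IHn by (intros; apply H; lia). rewrite H by lia. reflexivity. Qed.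
Lemma zsum_plus n f g : zsum n (fun i => f i + g i) = zsum n f + zsum n g.
Proof. induction n; simpl; lia. Qed.
Lemma zsum_opp n f : zsum n (fun i => - f i) = - zsum n f.
Proof. induction n; simpl; lia. Qed.
Lemma zsum_minus n f g : zsum n (fun i => f i - g i) = zsum n f - zsum n g.
Proof. induction n; simpl; lia. Qed.
Lemma zsum_tele n g : zsum n (fun i => g (S i) - g i) = g n - g O.
Proof. induction n; simpl; lia. Qed.
Lemma zsum_shift n f : zsum (S n) f = f O + zsum n (fun i => f (S i)).
Proof. induction n; simpl in *; [lia|]. rewrite IHn. lia. Qed.
Lemma zsum_rev n f : zsum n (fun i => f (n - 1 - i)%nat) = zsum n f.
Proof.
  revert f; induction n; intros f; [reflexivity|].
  rewrite (zsum_shift n f). change (zsum (S n) (fun i => f (S n - 1 - i)%nat)) with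
    (zsum n (fun i => f (S n - 1 - i)%nat) + f (S n - 1 - n)%nat).
  replace (S n - 1 - n)%nat with O by lia. rewrite <- (IHn (fun k => f (S k))).
  rewrite (zsum_ext n (fun i => f (S n - 1 - i)%nat) (fun i => f (S (n - 1 - i)))) by (intros; f_equal; lia).
  lia.
Qed.
Lemma zsum_cong n f (a : nat -> Z) : (forall i, (i < n)%nat -> (f i - (a (S i) - a i)) mod 4 = 0) ->
  (zsum n f - (a n - a O)) mod 4 = 0.
Proof.
  induction n; simpl; intros H; [rewrite Z.sub_diag; reflexivity|].
  specialize (IHn ltac:(intros; apply H; lia)). specialize (H n ltac:(lia)).
  apply Z.mod_divide in IHn; [|lia]. apply Z.mod_divide in H; [|lia]. apply Z.mod_divide; [lia|].
  destruct IHn as [k1 Hk1]; destruct H as [k2 Hk2]. exists (k1 + k2). lia.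
Qed.

Section Grid.
Variable N : nat.
Variable Qg : nat -> nat -> Z.
Hypothesis HN : (1 <= N)%nat.
Hypothesis Hr : forall i j, r4 (Qg i j).
Hypothesis Hnb : forall i j i' j', (i <= N)%nat -> (j <= N)%nat -> (i' <= N)%nat -> (j' <= N)%nat ->
  (i' <= S i)%nat -> (i <= S i')%nat -> (j' <= S j)%nat -> (j <= S j')%nat -> (Qg i' j' - Qg i j) mod 4 <> 2.
Hypothesis Hanti : forall i j, (i <= N)%nat -> (j <= N)%nat -> (i = O \/ i = N \/ j = O \/ j = N) ->
  Qg (N - i) (N - j) = (Qg i j + 2) mod 4.

Let H i j := Dq (Qg i j) (Qg (S i) j).
Let V i j := Dq (Qg i j) (Qg i (S j)).

Lemma cell i j : (i < N)%nat -> (j < N)%nat -> H i j + V (S i) j - H i (S j) - V i j = 0.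
Proof.
  intros Hi Hj. unfold H, V.
  pose proof (Dq_cyc (Qg i j) (Qg (S i) j) (Qg (S i) (S j)) (Qg i (S j))) as C.
  rewrite (Dq_anti (Qg i (S j)) (Qg (S i) (S j))) in C; auto; [| apply Hnb; lia].
  rewrite (Dq_anti (Qg i j) (Qg i (S j))) in C; auto; [| apply Hnb; lia].
  rewrite <- C; auto; try (apply Hnb; lia); lia.
Qed.

Lemma row j : (j < N)%nat -> zsum N (fun i => H i j) - zsum N (fun i => H i (S j)) + (V N j - V O j) = 0.
Proof.
  intros Hj. rewrite <- (zsum_tele N (fun i => V i j)).
  rewrite <- zsum_minus, <- !zsum_plus.
  rewrite (zsum_ext N _ (fun _ => 0)).
  - clear. induction N; simpl; lia.
  - intros i Hi. pose proof (cell i j Hi Hj). lia.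
Qed.

Lemma grid_false : False.
Proof.
  assert (E : zsum N (fun i => H i O) - zsum N (fun i => H i N) + zsum N (fun j => V N j) - zsum N (fun j => V O j) = 0).
  { assert (E1 : zsum N (fun j => zsum N (fun i => H i j) - zsum N (fun i => H i (S j)) + (V N j - V O j)) = 0).
    { rewrite (zsum_ext N _ (fun _ => 0)) by (intros; apply row; auto). clear. induction N; simpl; lia. }
    rewrite zsum_plus in E1.
    replace (zsum N (fun j => zsum N (fun i => H i j) - zsum N (fun i => H i (S j))))
      with (- (zsum N (fun i => H i N) - zsum N (fun i => H i O))) in E1
      by (rewrite <- (zsum_tele N (fun j => zsum N (fun i => H i j))), <- zsum_opp; apply zsum_ext; intros; simpl; lia).
    rewrite zsum_minus in E1.
    change (zsum N (V N)) with (zsum N (fun j => V N j)) in E1; change (zsum N (V O)) with (zsum N (fun j => V O j)) in E1; lia. }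
  assert (EH : zsum N (fun i => H i N) = - zsum N (fun i => H i O)).
  { rewrite <- zsum_opp, <- (zsum_rev N (fun i => - H i O)). apply zsum_ext. intros i Hi.
    unfold H.
    assert (A1 : Qg i N = (Qg (N - i) O + 2) mod 4) by (rewrite <- Hanti by lia; f_equal; lia).
    assert (A2 : Qg (S i) N = (Qg (N - S i) O + 2) mod 4) by (rewrite <- Hanti by lia; f_equal; lia).
    rewrite A1, A2, Dq_shift by auto.
    replace (N - i)%nat with (S (N - 1 - i)) by lia. replace (N - S i)%nat with (N - 1 - i)%nat by lia.
    rewrite Dq_anti; auto. apply Hnb; lia. }
  assert (EV : zsum N (fun j => V O j) = - zsum N (fun j => V N j)).
  { rewrite <- zsum_opp, <- (zsum_rev N (fun j => - V N j)). apply zsum_ext. intros j Hj.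
    unfold V.
    assert (A1 : Qg O j = (Qg N (N - j) + 2) mod 4) by (rewrite <- Hanti by lia; f_equal; lia).
    assert (A2 : Qg O (S j) = (Qg N (N - S j) + 2) mod 4) by (rewrite <- Hanti by lia; f_equal; lia).
    rewrite A1, A2, Dq_shift by auto.
    replace (N - j)%nat with (S (N - 1 - j)) by lia. replace (N - S j)%nat with (N - 1 - j)%nat by lia.
    rewrite Dq_anti; auto. apply Hnb; lia. }
  assert (T0 : zsum N (fun i => H i O) + zsum N (fun j => V N j) = 0) by lia.
  assert (C1 := zsum_cong N (fun i => H i O) (fun i => Qg i O)).
  assert (C2 := zsum_cong N (fun j => V N j) (fun j => Qg N j)).
  specialize (C1 ltac:(intros; unfold H; apply Dq_cong; auto; apply Hnb; lia)).
  specialize (C2 ltac:(intros; unfold V; apply Dq_cong; auto; apply Hnb; lia)).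
  pose proof (Hanti O O ltac:(lia) ltac:(lia) ltac:(lia)) as A.
  replace (N - O)%nat with N in A by lia.
  simpl in C1, C2.
  apply Z.mod_divide in C1; [|lia]. apply Z.mod_divide in C2; [|lia].
  destruct C1 as [k1 K1]; destruct C2 as [k2 K2].
  destruct (Hr O O) as [X|[X|[X|X]]]; rewrite X in A; vm_compute in A; lia.
Qed.
End Grid.

End ZPart.
Import ZPart.

Definition quadr (x y : R) : Z :=
  if Rlt_dec 0 x then (if Rle_dec 0 y then 0%Z else 3%Z)
  else if Rlt_dec 0 y then 1%Z else if Rlt_dec x 0 then 2%Z else if Rlt_dec y 0 then 3%Z else 0%Z.

Lemma quadr_neg x y : (x <> 0 \/ y <> 0) -> quadr (-x) (-y) = ((quadr x y + 2) mod 4)%Z.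
Proof.
  intros Hn. unfold quadr.
  repeat (destruct Rlt_dec || destruct Rle_dec); vm_compute; try reflexivity; exfalso; lra.
Qed.

Lemma quadr_opp x y u v : (x <> 0 \/ y <> 0) -> (u <> 0 \/ v <> 0) -> ((quadr u v - quadr x y) mod 4 = 2)%Z ->
  x * u + y * v <= 0.
Proof.
  intros Hn Hm. unfold quadr.
  repeat (destruct Rlt_dec || destruct Rle_dec); vm_compute; intro E; try discriminate; try nra.
Qed.

Lemma dot_pos p1 p2 u1 u2 v1 v2 M : M = Rmax (Rabs p1) (Rabs p2) -> M > 0 ->
  Rabs (u1 - p1) < M/8 -> Rabs (u2 - p2) < M/8 -> Rabs (v1 - p1) < M/8 -> Rabs (v2 - p2) < M/8 ->
  u1 * v1 + u2 * v2 > 0.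
Proof.
  intros HM HMp H1 H2 H3 H4.
  apply Rabs_def2 in H1; apply Rabs_def2 in H2; apply Rabs_def2 in H3; apply Rabs_def2 in H4.
  unfold Rmax, Rabs in HM; repeat destruct Rcase_abs in HM; destruct Rle_dec in HM; subst M;
  set (e1 := u1 - p1) in *; set (e2 := u2 - p2) in *; set (f1 := v1 - p1) in *; set (f2 := v2 - p2) in *;
  replace u1 with (p1 + e1) by (unfold e1; ring); replace u2 with (p2 + e2) by (unfold e2; ring);
  replace v1 with (p1 + f1) by (unfold f1; ring); replace v2 with (p2 + f2) by (unfold f2; ring);
  clearbody e1 e2 f1 f2; nra.
Qed.

Lemma Rdiv_le_0_compat' a b : 0 <= a -> 0 < b -> 0 <= a / b.
Proof. intros; unfold Rdiv; apply Rmult_le_pos; [auto| left; apply Rinv_0_lt_compat; auto]. Qed.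

Lemma quadr_r4 x y : r4 (quadr x y).
Proof. unfold quadr, r4. repeat (destruct Rlt_dec || destruct Rle_dec); auto. Qed.

Definition InQ a b := -1 <= a <= 1 /\ -1 <= b <= 1.

Lemma half_sq a cx r : r > 0 -> Rabs (a - cx) <= r -> a <= cx -> Rabs (a - (cx - r/2)) <= r/2.
Proof. intros Hr H1 H2; apply Rabs_le_inv' in H1; apply Rabs_le; lra. Qed.
Lemma half_sq' a cx r : r > 0 -> Rabs (a - cx) <= r -> ~ a <= cx -> Rabs (a - (cx + r/2)) <= r/2.
Proof. intros Hr H1 H2; apply Rabs_le_inv' in H1; apply Rabs_le; lra. Qed.

Lemma odd_square (h1 h2 : R -> R -> R)
 (Hc : forall a b, InQ a b -> forall eps, eps > 0 -> exists del, del > 0 /\ forall a' b', InQ a' b' ->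
     Rabs (a' - a) < del -> Rabs (b' - b) < del -> Rabs (h1 a' b' - h1 a b) < eps /\ Rabs (h2 a' b' - h2 a b) < eps)
 (Hnz : forall a b, InQ a b -> h1 a b <> 0 \/ h2 a b <> 0)
 (Hodd : forall a b, InQ a b -> (a = -1 \/ a = 1 \/ b = -1 \/ b = 1) ->
     h1 (-a) (-b) = - h1 a b /\ h2 (-a) (-b) = - h2 a b) : False.
Proof.
  assert (U : exists del, del > 0 /\ forall a b a' b', InQ a b -> InQ a' b' -> Rabs (a' - a) < del -> Rabs (b' - b) < del ->
     h1 a b * h1 a' b' + h2 a b * h2 a' b' > 0).
  { set (P := fun cx cy r => exists del, del > 0 /\ forall a b a' b', InQ a b -> InQ a' b' ->
        Rabs (a - cx) <= r -> Rabs (b - cy) <= r -> Rabs (a' - a) < del -> Rabs (b' - b) < del ->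
        h1 a b * h1 a' b' + h2 a b * h2 a' b' > 0).
    assert (HP : P 0 0 1).
    { apply compact2; [| lra |].
      - intros cx cy r Hr [d1 [D1 K1]] [d2 [D2 K2]] [d3 [D3 K3]] [d4 [D4 K4]].
        exists (Rmin (Rmin d1 d2) (Rmin d3 d4)). split.
        { repeat apply Rmin_glb_lt; auto. }
        intros a b a' b' Qa Qb Ha Hb Ha' Hb'.
        pose proof (Rmin_l (Rmin d1 d2) (Rmin d3 d4)); pose proof (Rmin_r (Rmin d1 d2) (Rmin d3 d4)).
        pose proof (Rmin_l d1 d2); pose proof (Rmin_r d1 d2); pose proof (Rmin_l d3 d4); pose proof (Rmin_r d3 d4).
        destruct (Rle_dec a cx) as [ea|ea]; destruct (Rle_dec b cy) as [eb|eb].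
        + apply K1; auto; try (apply half_sq; auto); lra.
        + apply K3; auto; try (apply half_sq; auto); try (apply half_sq'; auto); lra.
        + apply K2; auto; try (apply half_sq; auto); try (apply half_sq'; auto); lra.
        + apply K4; auto; try (apply half_sq'; auto); lra.
      - intros px py Hpx Hpy.
        assert (Qp : InQ px py) by (apply Rabs_le_inv' in Hpx; apply Rabs_le_inv' in Hpy; unfold InQ; lra).
        set (M := Rmax (Rabs (h1 px py)) (Rabs (h2 px py))).
        assert (HM : M > 0).
        { unfold M. destruct (Hnz px py Qp) as [n|n]; apply Rabs_pos_lt in n;
          [eapply Rlt_le_trans; [|apply Rmax_l] | eapply Rlt_le_trans; [|apply Rmax_r]]; exact n. }
        destruct (Hc px py Qp (M/8) ltac:(lra)) as [d0 [D0 K0]].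
        exists (d0/4). split; [lra|].
        intros cx cy r [r0 rr] Hcx Hcy. exists (d0/4). split; [lra|].
        intros a b a' b' Qa Qb Ha Hb Ha' Hb'.
        apply Rabs_le_inv' in Hcx, Hcy, Ha, Hb. apply Rabs_lt_inv' in Ha', Hb'.
        destruct (K0 a b Qa) as [k1 k2]; try (apply Rabs_def1; lra).
        destruct (K0 a' b' Qb) as [k3 k4]; try (apply Rabs_def1; lra).
        eapply dot_pos; eauto. }
    destruct HP as [del [Hd K]]. exists del. split; auto.
    intros a b a' b' Qa Qb. apply K; auto; destruct Qa; rewrite Rminus_0_r; apply Rabs_le; lra. }
  destruct U as [del [Hdel U]].
  destruct (archimed_cor1 (del/2) ltac:(lra)) as [N [HN1 HN0]].
  pose proof (lt_0_INR N HN0) as HNp.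
  set (xg := fun i : nat => -1 + 2 * INR i / INR N).
  assert (Xin : forall i, (i <= N)%nat -> -1 <= xg i <= 1).
  { intros i Hi. apply le_INR in Hi. pose proof (pos_INR i). unfold xg. split.
    - assert (0 <= 2 * INR i / INR N) by (apply Rdiv_le_0_compat'; lra). lra.
    - assert (2 * INR i / INR N <= 2); [|lra].
      apply (Rmult_le_reg_r (INR N)); auto. unfold Rdiv. rewrite Rmult_assoc, Rinv_l; lra. }
  assert (Xnb : forall i i', (i' <= S i)%nat -> (i <= S i')%nat -> Rabs (xg i' - xg i) < del).
  { intros i i' H1 H2. apply le_INR in H1, H2. rewrite S_INR in H1, H2.
    unfold xg. replace (-1 + 2 * INR i' / INR N - (-1 + 2 * INR i / INR N)) with ((INR i' - INR i) * (2 / INR N)) by (field; lra).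
    rewrite Rabs_mult. rewrite (Rabs_right (2 / INR N)) by (apply Rle_ge, Rdiv_le_0_compat'; lra).
    assert (Rabs (INR i' - INR i) <= 1) by (apply Rabs_le; lra).
    assert (2 / INR N < del) by (unfold Rdiv; lra).
    assert (0 <= 2 / INR N) by (apply Rdiv_le_0_compat'; lra).
    pose proof (Rabs_pos (INR i' - INR i)). nra. }
  assert (Xneg : forall i, (i <= N)%nat -> xg (N - i)%nat = - xg i).
  { intros i Hi. unfold xg. rewrite minus_INR by auto. field. lra. }
  assert (X0 : xg O = -1) by (unfold xg; simpl; field; lra).
  assert (XN : xg N = 1) by (unfold xg; field; lra).
  apply (grid_false N (fun i j => quadr (h1 (xg i) (xg j)) (h2 (xg i) (xg j)))).
  - lia.
  - intros; apply quadr_r4.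
  - intros i j i' j' Hi Hj Hi' Hj' H1 H2 H3 H4 E.
    assert (Q1 : InQ (xg i) (xg j)) by (split; auto).
    assert (Q2 : InQ (xg i') (xg j')) by (split; auto).
    apply quadr_opp in E; try (apply Hnz; auto).
    pose proof (U _ _ _ _ Q1 Q2 (Xnb _ _ H1 H2) (Xnb _ _ H3 H4)). lra.
  - intros i j Hi Hj Hb. rewrite !Xneg by auto.
    assert (Q1 : InQ (xg i) (xg j)) by (split; auto).
    destruct (Hodd (xg i) (xg j) Q1) as [E1 E2].
    { destruct Hb as [->|[->|[->| ->]]]; auto. }
    rewrite E1, E2. apply quadr_neg. apply Hnz; auto.
Qed.

Definition vcons {m} (x : R) (g : Fin.t m -> R) : Fin.t (S m) -> R :=
  fun i => match i in Fin.t k return (Fin.t (pred k) -> R) -> R with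
           | Fin.F1 => fun _ => x
           | Fin.FS j => fun g => g j end g.

Lemma fin_sum_zero m (f : Fin.t m -> R) : (forall i, f i = 0) -> fin_sum m f = 0.
Proof. revert f; induction m; intros f H; simpl; auto. rewrite H, IHm; auto; ring. Qed.

Lemma fin2_ext (u v : Rn 2) : u Fin.F1 = v Fin.F1 -> u (Fin.FS Fin.F1) = v (Fin.FS Fin.F1) -> u = v.
Proof.
  intros H1 H2. apply functional_extensionality. intro i.
  apply (Fin.caseS' i); auto. intro p. apply (Fin.caseS' p); auto. intro q. apply (Fin.case0 (fun _ => _) q).
Qed.

Lemma sqrt_lt_bound x e : 0 <= x -> 0 < e -> x < e * e -> sqrt x < e.
Proof. intros. rewrite <- (sqrt_square e) by lra. apply sqrt_lt_1_alt. lra. Qed.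


Lemma dist2_coords (u v : Rn 2) : Rabs (u Fin.F1 - v Fin.F1) <= euclid_dist 2 u v /\
  Rabs (u (Fin.FS Fin.F1) - v (Fin.FS Fin.F1)) <= euclid_dist 2 u v.
Proof.
  unfold euclid_dist. simpl. rewrite <- !sqrt_Rsqr_abs. unfold Rsqr. split; apply sqrt_le_1_alt.
  - pose proof (pow2_ge_0 (u (Fin.FS Fin.F1) - v (Fin.FS Fin.F1))). lra.
  - pose proof (pow2_ge_0 (u Fin.F1 - v Fin.F1)). lra.
Qed.

Section Ge3.
Variable m : nat.
Definition cf (a b : R) := (1 - a*a) * (1 - b*b).
Definition psi (a b : R) : Rn (S (S (S m))) := vcons a (vcons b (vcons (cf a b) (fun _ => 0))).
Definition psi' (a b : R) : Rn (S (S (S m))) := vcons (-a) (vcons (-b) (vcons (- cf a b) (fun _ => 0))).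

Lemma dist3 x1 x2 x3 y1 y2 y3 : euclid_dist (S (S (S m)))
   (vcons x1 (vcons x2 (vcons x3 (fun _ => 0)))) (vcons y1 (vcons y2 (vcons y3 (fun _ => 0)))) =
   sqrt ((x1 - y1)^2 + ((x2 - y2)^2 + ((x3 - y3)^2 + 0))).
Proof. unfold euclid_dist. simpl. rewrite (fin_sum_zero m); [reflexivity|]. intros; simpl; ring. Qed.

Lemma cf_lip a b a' b' d : InQ a b -> InQ a' b' -> Rabs (a' - a) < d -> Rabs (b' - b) < d ->
  (cf a b - cf a' b')^2 <= 16 * d * d.
Proof.
  unfold InQ, cf; intros [Ha Hb] [Ha' Hb'] H1 H2. apply Rabs_lt_inv' in H1, H2.
  assert (E1 : Rabs (a*a - a'*a') <= 2 * d).
  { replace (a*a - a'*a') with ((a - a') * (a + a')) by ring. rewrite Rabs_mult.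
    assert (Rabs (a - a') <= d) by (apply Rabs_le; lra). assert (Rabs (a + a') <= 2) by (apply Rabs_le; lra).
    pose proof (Rabs_pos (a - a')); pose proof (Rabs_pos (a+a')). nra. }
  assert (E2 : Rabs (b*b - b'*b') <= 2 * d).
  { replace (b*b - b'*b') with ((b - b') * (b + b')) by ring. rewrite Rabs_mult.
    assert (Rabs (b - b') <= d) by (apply Rabs_le; lra). assert (Rabs (b + b') <= 2) by (apply Rabs_le; lra).
    pose proof (Rabs_pos (b - b')); pose proof (Rabs_pos (b+b')). nra. }
  assert (E3 : Rabs ((1 - a*a) * (1 - b*b) - (1 - a'*a') * (1 - b'*b')) <= 4 * d).
  { replace ((1 - a*a) * (1 - b*b) - (1 - a'*a') * (1 - b'*b')) with
       ((a'*a' - a*a) * (1 - b*b) + (1 - a'*a') * (b'*b' - b*b)) by ring.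
    eapply Rle_trans; [apply Rabs_triang|]. rewrite !Rabs_mult.
    rewrite <- (Rabs_Ropp (a'*a' - a*a)), <- (Rabs_Ropp (b'*b' - b*b)).
    replace (- (a'*a' - a*a)) with (a*a - a'*a') by ring. replace (- (b'*b' - b*b)) with (b*b - b'*b') by ring.
    assert (Rabs (1 - b*b) <= 1) by (apply Rabs_le; nra). assert (Rabs (1 - a'*a') <= 1) by (apply Rabs_le; nra).
    pose proof (Rabs_pos (1 - b*b)); pose proof (Rabs_pos (1 - a'*a')).
    pose proof (Rabs_pos (a*a - a'*a')); pose proof (Rabs_pos (b*b - b'*b')). nra. }
  apply Rabs_le_inv' in E3. simpl pow. rewrite Rmult_1_r. nra.
Qed.

Lemma psi_cont a b : InQ a b -> forall eps, eps > 0 -> exists del, del > 0 /\ forall a' b', InQ a' b' ->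
  Rabs (a' - a) < del -> Rabs (b' - b) < del ->
  euclid_dist _ (psi a b) (psi a' b') < eps /\ euclid_dist _ (psi' a b) (psi' a' b') < eps.
Proof.
  intros Q eps He. exists (eps/5). split; [lra|]. intros a' b' Q' H1 H2.
  pose proof (cf_lip a b a' b' (eps/5) Q Q' H1 H2) as C.
  apply Rabs_lt_inv' in H1, H2.
  unfold psi, psi'. rewrite !dist3. simpl pow in *. rewrite !Rmult_1_r in *.
  split; apply sqrt_lt_bound; try lra;
  try (repeat apply Rplus_le_le_0_compat; first [apply Rle_0_sqr | lra]); nra.
Qed.

Lemma case_ge3 (f : Rn (S (S (S m))) -> Rn 2) : continuous_Rn _ 2 f -> (forall x y, f x = f y -> x = y) -> False.
Proof.
  intros Hf Hinj.
  apply (odd_square (fun a b => f (psi a b) Fin.F1 - f (psi' a b) Fin.F1)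
                    (fun a b => f (psi a b) (Fin.FS Fin.F1) - f (psi' a b) (Fin.FS Fin.F1))).
  - intros a b Q eps He.
    destruct (Hf (psi a b) (eps/2) ltac:(lra)) as [d1 [D1 K1]].
    destruct (Hf (psi' a b) (eps/2) ltac:(lra)) as [d2 [D2 K2]].
    destruct (psi_cont a b Q (Rmin d1 d2) ltac:(apply Rmin_glb_lt; auto)) as [d [D K]].
    exists d; split; auto. intros a' b' Q' H1 H2.
    destruct (K a' b' Q' H1 H2) as [k1 k2].
    pose proof (Rmin_l d1 d2); pose proof (Rmin_r d1 d2).
    specialize (K1 (psi a' b') ltac:(lra)). specialize (K2 (psi' a' b') ltac:(lra)).
    destruct (dist2_coords (f (psi a b)) (f (psi a' b'))) as [c1 c2].
    destruct (dist2_coords (f (psi' a b)) (f (psi' a' b'))) as [c3 c4].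
    assert (e1 := Rle_lt_trans _ _ _ c1 K1). assert (e2 := Rle_lt_trans _ _ _ c2 K1).
    assert (e3 := Rle_lt_trans _ _ _ c3 K2). assert (e4 := Rle_lt_trans _ _ _ c4 K2).
    apply Rabs_lt_inv' in e1, e2, e3, e4. split; apply Rabs_def1; lra.
  - intros a b Q. apply NNPP. intro Hn. apply not_or_and in Hn. destruct Hn as [n1 n2].
    apply NNPP in n1; apply NNPP in n2.
    assert (E : psi a b = psi' a b) by (apply Hinj; apply fin2_ext; lra).
    pose proof (f_equal (fun g => g Fin.F1) E) as E1.
    pose proof (f_equal (fun g => g (Fin.FS Fin.F1)) E) as E2.
    pose proof (f_equal (fun g => g (Fin.FS (Fin.FS Fin.F1))) E) as E3.
    unfold psi, psi', cf in E1, E2, E3. simpl in E1, E2, E3.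
    assert (a = 0) by lra. assert (b = 0) by lra. subst. lra.
  - intros a b Q Hb.
    assert (C0 : cf a b = 0) by (unfold cf; destruct Hb as [->|[->|[->| ->]]]; ring).
    assert (C1 : cf (-a) (-b) = 0) by (unfold cf; destruct Hb as [->|[->|[->| ->]]]; ring).
    assert (P1 : psi (-a) (-b) = psi' a b) by (unfold psi, psi'; rewrite C0, C1, Ropp_0; reflexivity).
    assert (P2 : psi' (-a) (-b) = psi a b) by (unfold psi, psi'; rewrite C0, C1, Ropp_0, !Ropp_involutive; reflexivity).
    rewrite P1, P2. split; ring.
Qed.
End Ge3.

Lemma cont_pt_of (g : R -> R) : (forall x eps, eps > 0 -> exists d, d > 0 /\ forall y, Rabs (y - x) < d -> Rabs (g y - g x) < eps) ->
  forall x, continuity_pt g x.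
Proof.
  intros H x. unfold continuity_pt, continue_in, limit1_in, limit_in. simpl. unfold Rdist.
  intros eps He; destruct (H x eps He) as [d [Hd K]]; exists d; split; auto; intros y [_ Hy]; apply K; exact Hy.
Qed.

Section Case1.
Variables F1 F2 : R -> R.
Hypothesis Hc : forall x eps, eps > 0 -> exists d, d > 0 /\ forall y, Rabs (y - x) < d ->
  Rabs (F1 y - F1 x) < eps /\ Rabs (F2 y - F2 x) < eps.
Hypothesis Hinj : forall x y, F1 x = F1 y -> F2 x = F2 y -> x = y.
Hypothesis Hsurj : forall p1 p2, exists x, F1 x = p1 /\ F2 x = p2.

Lemma F1c : forall x, continuity_pt F1 x.
Proof. apply cont_pt_of. intros x eps He. destruct (Hc x eps He) as [d [Hd K]]. exists d; split; auto. intros y Hy; apply K; auto. Qed.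
Lemma F2c : forall x, continuity_pt F2 x.
Proof. apply cont_pt_of. intros x eps He. destruct (Hc x eps He) as [d [Hd K]]. exists d; split; auto. intros y Hy; apply K; auto. Qed.

Lemma minsep a b p1 p2 : (forall x, a <= x <= b -> ~ (F1 x = p1 /\ F2 x = p2)) ->
  exists e, e > 0 /\ forall x, a <= x <= b -> Rabs (F1 x - p1) >= e \/ Rabs (F2 x - p2) >= e.
Proof.
  intros Hn. destruct (Rle_dec a b) as [Hab|Hab]; [| exists 1; split; [lra| intros; lra]].
  set (D := plus_fct (mult_fct (minus_fct F1 (fct_cte p1)) (minus_fct F1 (fct_cte p1)))
                     (mult_fct (minus_fct F2 (fct_cte p2)) (minus_fct F2 (fct_cte p2)))).
  assert (DC : forall c, a <= c <= b -> continuity_pt D c).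
  { intros c _. unfold D. apply continuity_pt_plus; apply continuity_pt_mult; apply continuity_pt_minus;
    try apply F1c; try apply F2c; apply continuity_pt_const; unfold constant, fct_cte; auto. }
  destruct (continuity_ab_min D a b Hab DC) as [mx [Hmin Hmx]].
  assert (Dv : forall x, D x = (F1 x - p1) * (F1 x - p1) + (F2 x - p2) * (F2 x - p2)) by reflexivity.
  assert (Mpos : D mx > 0).
  { rewrite Dv. destruct (Req_dec (F1 mx) p1) as [e1|e1]; destruct (Req_dec (F2 mx) p2) as [e2|e2].
    - exfalso; apply (Hn mx Hmx); auto.
    - assert (F2 mx - p2 <> 0) by lra. pose proof (Rsqr_pos_lt _ H). unfold Rsqr in *. nra.
    - assert (F1 mx - p1 <> 0) by lra. pose proof (Rsqr_pos_lt _ H). unfold Rsqr in *. nra.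
    - assert (F2 mx - p2 <> 0) by lra. pose proof (Rsqr_pos_lt _ H). unfold Rsqr in *. nra. }
  exists (Rmin 1 (D mx / 4)). split; [apply Rmin_glb_lt; lra|].
  intros x Hx. specialize (Hmin x Hx). rewrite !Dv in Hmin. rewrite Dv in Mpos.
  pose proof (Rmin_l 1 (D mx / 4)); pose proof (Rmin_r 1 (D mx / 4)). rewrite Dv in H0.
  set (e := Rmin 1 _) in *. clearbody e.
  destruct (Rle_dec e (Rabs (F1 x - p1))) as [h|h]; [left; lra|].
  destruct (Rle_dec e (Rabs (F2 x - p2))) as [h'|h']; [right; lra|].
  exfalso. apply Rnot_le_lt in h, h'. apply Rabs_lt_inv' in h, h'.
  assert ((F1 x - p1) * (F1 x - p1) < e * e) by nra.
  assert ((F2 x - p2) * (F2 x - p2) < e * e) by nra.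
  assert (0 < e) by (pose proof (Rabs_pos (F1 x - p1)); lra). nra.
Qed.

Definition Kk (k z1 z2 : R) := exists x, -k <= x <= k /\ F1 x = z1 /\ F2 x = z2.

Lemma invcont k x0 eps : -k <= x0 <= k -> eps > 0 -> exists eta, eta > 0 /\ forall x, -k <= x <= k ->
  Rabs (F1 x - F1 x0) < eta -> Rabs (F2 x - F2 x0) < eta -> Rabs (x - x0) < eps.
Proof.
  intros Hx0 He.
  destruct (minsep (-k) (x0 - eps) (F1 x0) (F2 x0)) as [e1 [E1 K1]].
  { intros x Hx [h1 h2]. pose proof (Hinj _ _ h1 h2). lra. }
  destruct (minsep (x0 + eps) k (F1 x0) (F2 x0)) as [e2 [E2 K2]].
  { intros x Hx [h1 h2]. pose proof (Hinj _ _ h1 h2). lra. }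
  exists (Rmin e1 e2). split; [apply Rmin_glb_lt; auto|].
  intros x Hx h1 h2. pose proof (Rmin_l e1 e2); pose proof (Rmin_r e1 e2).
  destruct (Rlt_dec (Rabs (x - x0)) eps) as [ok|nok]; auto. exfalso.
  apply Rnot_lt_le in nok. unfold Rabs in nok; destruct (Rcase_abs (x - x0)).
  - destruct (K1 x ltac:(lra)); lra.
  - destruct (K2 x ltac:(lra)); lra.
Qed.

Definition G (p1 p2 : R) : R := proj1_sig (constructive_indefinite_description _ (Hsurj p1 p2)).
Lemma GP p1 p2 : F1 (G p1 p2) = p1 /\ F2 (G p1 p2) = p2.
Proof. unfold G. destruct constructive_indefinite_description; simpl; auto. Qed.
Lemma G_F x : G (F1 x) (F2 x) = x.
Proof. destruct (GP (F1 x) (F2 x)). apply Hinj; auto. Qed.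
Lemma G_K k z1 z2 : Kk k z1 z2 -> -k <= G z1 z2 <= k.
Proof. intros [x [Hx [<- <-]]]. rewrite G_F. auto. Qed.

Definition clamp t := Rmax 0 (Rmin 1 t).
Lemma clamp_in t : 0 <= clamp t <= 1.
Proof. unfold clamp, Rmax, Rmin; repeat destruct Rle_dec; lra. Qed.
Lemma clamp_id t : 0 <= t <= 1 -> clamp t = t.
Proof. unfold clamp, Rmax, Rmin; repeat destruct Rle_dec; lra. Qed.
Lemma clamp_lip t s : Rabs (clamp t - clamp s) <= Rabs (t - s).
Proof. unfold clamp, Rmax, Rmin; repeat destruct Rle_dec; unfold Rabs; repeat destruct Rcase_abs; lra. Qed.

Lemma seg_same k c1 c2 r p1 p2 q1 q2 : r > 0 -> (forall z1 z2, Rabs (z1 - c1) < r -> Rabs (z2 - c2) < r -> Kk k z1 z2) ->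
  (forall t, 0 <= t <= 1 -> Rabs (p1 + t * (q1 - p1) - c1) < r /\ Rabs (p2 + t * (q2 - p2) - c2) < r /\
      ~ (p1 + t * (q1 - p1) = c1 /\ p2 + t * (q2 - p2) = c2)) ->
  (G p1 p2 < G c1 c2 <-> G q1 q2 < G c1 c2).
Proof.
  intros Hr HU Hseg. set (t0 := G c1 c2).
  set (sg := fun t => G (p1 + clamp t * (q1 - p1)) (p2 + clamp t * (q2 - p2)) - t0).
  assert (Sc : continuity sg).
  { unfold continuity; apply cont_pt_of. intros tau eps He.
    destruct (Hseg (clamp tau) (clamp_in tau)) as [u1 [u2 _]].
    pose proof (G_K _ _ _ (HU _ _ u1 u2)) as Hx0.
    destruct (invcont k _ eps Hx0 He) as [eta [Heta K]].
    set (L := 1 + Rabs (q1 - p1) + Rabs (q2 - p2)).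
    assert (HL : L > 0) by (unfold L; pose proof (Rabs_pos (q1 - p1)); pose proof (Rabs_pos (q2 - p2)); lra).
    exists (eta / L). split; [apply Rdiv_lt_0_compat; lra|].
    intros s Hs. unfold sg.
    destruct (Hseg (clamp s) (clamp_in s)) as [v1 [v2 _]].
    pose proof (G_K _ _ _ (HU _ _ v1 v2)) as Hx.
    destruct (GP (p1 + clamp s * (q1 - p1)) (p2 + clamp s * (q2 - p2))) as [g1 g2].
    destruct (GP (p1 + clamp tau * (q1 - p1)) (p2 + clamp tau * (q2 - p2))) as [g3 g4].
    set (x := G (p1 + clamp s * (q1 - p1)) (p2 + clamp s * (q2 - p2))) in *.
    set (x0 := G (p1 + clamp tau * (q1 - p1)) (p2 + clamp tau * (q2 - p2))) in *.
    replace (x - t0 - (x0 - t0)) with (x - x0) by ring. apply K; auto.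
    + rewrite g1, g3. replace (p1 + clamp s * (q1 - p1) - (p1 + clamp tau * (q1 - p1))) with ((clamp s - clamp tau) * (q1 - p1)) by ring.
      rewrite Rabs_mult. pose proof (clamp_lip s tau). pose proof (Rabs_pos (clamp s - clamp tau)).
      pose proof (Rabs_pos (q1 - p1)). pose proof (Rabs_pos (q2 - p2)).
      assert (Rabs (s - tau) * L < eta) by (apply (Rmult_lt_compat_r L) in Hs; [|lra]; unfold Rdiv in Hs; rewrite Rmult_assoc, Rinv_l in Hs; lra).
      unfold L in *. nra.
    + rewrite g2, g4. replace (p2 + clamp s * (q2 - p2) - (p2 + clamp tau * (q2 - p2))) with ((clamp s - clamp tau) * (q2 - p2)) by ring.
      rewrite Rabs_mult. pose proof (clamp_lip s tau). pose proof (Rabs_pos (clamp s - clamp tau)).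
      pose proof (Rabs_pos (q1 - p1)). pose proof (Rabs_pos (q2 - p2)).
      assert (Rabs (s - tau) * L < eta) by (apply (Rmult_lt_compat_r L) in Hs; [|lra]; unfold Rdiv in Hs; rewrite Rmult_assoc, Rinv_l in Hs; lra).
      unfold L in *. nra. }
  assert (S0 : sg 0 = G p1 p2 - t0).
  { unfold sg. rewrite clamp_id by lra. f_equal. f_equal; ring. }
  assert (S1 : sg 1 = G q1 q2 - t0).
  { unfold sg. rewrite clamp_id by lra. f_equal. f_equal; ring. }
  assert (Hc0 : forall z1 z2, G z1 z2 = t0 -> z1 = c1 /\ z2 = c2).
  { intros z1 z2 E. destruct (GP z1 z2) as [e1 e2]. destruct (GP c1 c2) as [e3 e4].
    unfold t0 in E. rewrite E in e1, e2. split; congruence. }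
  assert (Np : G p1 p2 <> t0).
  { intro E. apply Hc0 in E. destruct (Hseg 0 ltac:(lra)) as [_ [_ N]]. apply N. split; lra. }
  assert (Nq : G q1 q2 <> t0).
  { intro E. apply Hc0 in E. destruct (Hseg 1 ltac:(lra)) as [_ [_ N]]. apply N. split; lra. }
  assert (NoCross : ~ (sg 0 * sg 1 <= 0)).
  { intro H. destruct (IVT_cor sg 0 1 Sc ltac:(lra) H) as [z [Hz Ez]].
    unfold sg in Ez. assert (Ez2 : G (p1 + clamp z * (q1 - p1)) (p2 + clamp z * (q2 - p2)) = t0) by lra. apply Hc0 in Ez2.
    destruct (Hseg (clamp z) (clamp_in z)) as [_ [_ N]]. apply N; auto. }
  rewrite S0, S1 in NoCross. split; intro h.
  - destruct (Rlt_dec (G q1 q2) t0) as [ok|nok]; auto. exfalso; apply NoCross.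
    assert (G q1 q2 > t0) by lra. nra.
  - destruct (Rlt_dec (G p1 p2) t0) as [ok|nok]; auto. exfalso; apply NoCross.
    assert (G p1 p2 > t0) by lra. nra.
Qed.

Section Geo.
Variables k c1 c2 r rho : R.
Hypothesis Hr : 0 < rho < r.
Hypothesis HU : forall z1 z2, Rabs (z1 - c1) < r -> Rabs (z2 - c2) < r -> Kk k z1 z2.

Lemma seg_box p1 p2 q1 q2 : Rabs (p1 - c1) <= rho -> Rabs (p2 - c2) <= rho -> Rabs (q1 - c1) <= rho -> Rabs (q2 - c2) <= rho ->
  ((p1 = q1 /\ p1 <> c1) \/ (p2 = q2 /\ p2 <> c2)) -> (G p1 p2 < G c1 c2 <-> G q1 q2 < G c1 c2).
Proof.
  intros h1 h2 h3 h4 Hn. apply (seg_same k c1 c2 r); [lra|exact HU|].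
  intros t Ht. apply Rabs_le_inv' in h1, h2, h3, h4.
  replace (p1 + t * (q1 - p1) - c1) with ((1 - t) * (p1 - c1) + t * (q1 - c1)) by ring.
  replace (p2 + t * (q2 - p2) - c2) with ((1 - t) * (p2 - c2) + t * (q2 - c2)) by ring.
  split; [|split].
  - apply Rabs_def1; nra.
  - apply Rabs_def1; nra.
  - intros [e1 e2]. destruct Hn as [[-> n]|[-> n]]; apply n; [rewrite <- e1| rewrite <- e2]; ring.
Qed.

Lemma side w1 w2 : Rabs (w1 - c1) <= rho -> Rabs (w2 - c2) <= rho -> (Rabs (w1 - c1) = rho \/ Rabs (w2 - c2) = rho) ->
  (G w1 w2 < G c1 c2 <-> G (c1 + rho) (c2 + rho) < G c1 c2).
Proof.
  intros h1 h2 Hb.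
  assert (A : forall x, Rabs (x - c1) = rho -> x = c1 + rho \/ x = c1 - rho).
  { intros x Hx. unfold Rabs in Hx; destruct Rcase_abs in Hx; lra. }
  assert (A2 : forall x, Rabs (x - c2) = rho -> x = c2 + rho \/ x = c2 - rho).
  { intros x Hx. unfold Rabs in Hx; destruct Rcase_abs in Hx; lra. }
  assert (Bp : Rabs (c1 + rho - c1) <= rho) by (apply Rabs_le; lra).
  assert (Bm : Rabs (c1 - rho - c1) <= rho) by (apply Rabs_le; lra).
  assert (Bp2 : Rabs (c2 + rho - c2) <= rho) by (apply Rabs_le; lra).
  assert (Bm2 : Rabs (c2 - rho - c2) <= rho) by (apply Rabs_le; lra).
  destruct Hb as [Hb|Hb].
  - destruct (A w1 Hb) as [->| ->].
    + apply seg_box; auto. left; split; [reflexivity|lra].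
    + rewrite (seg_box (c1 - rho) w2 (c1 - rho) (c2 + rho)); auto; [|left; split; [reflexivity|lra]].
      apply seg_box; auto. right; split; [reflexivity|lra].
  - destruct (A2 w2 Hb) as [->| ->].
    + apply seg_box; auto. right; split; [reflexivity|lra].
    + rewrite (seg_box w1 (c2 - rho) (c1 + rho) (c2 - rho)); auto; [|right; split; [reflexivity|lra]].
      apply seg_box; auto. left; split; [reflexivity|lra].
Qed.

Lemma ray a1 a2 : Rabs (a1 - c1) < rho -> Rabs (a2 - c2) < rho -> ~ (a1 = c1 /\ a2 = c2) ->
  (G a1 a2 < G c1 c2 <-> G (c1 + rho) (c2 + rho) < G c1 c2).
Proof.
  intros h1 h2 Hn.
  set (s := Rmax (Rabs (a1 - c1)) (Rabs (a2 - c2))).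
  assert (s1 : Rabs (a1 - c1) <= s) by apply Rmax_l.
  assert (s2 : Rabs (a2 - c2) <= s) by apply Rmax_r.
  assert (sp : s > 0).
  { destruct (Req_dec a1 c1) as [e|e].
    - assert (a2 <> c2) by tauto. assert (Rabs (a2 - c2) > 0) by (apply Rabs_pos_lt; lra). lra.
    - assert (Rabs (a1 - c1) > 0) by (apply Rabs_pos_lt; lra). lra. }
  assert (sr : s < rho) by (unfold s; apply Rmax_lub_lt; auto).
  set (m := rho / s).
  assert (m1 : m > 1) by (unfold m; apply (Rmult_lt_reg_r s); auto; unfold Rdiv; rewrite Rmult_assoc, Rinv_l; lra).
  assert (ms : m * s = rho) by (unfold m; field; lra).
  set (b1 := c1 + m * (a1 - c1)). set (b2 := c2 + m * (a2 - c2)).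
  assert (bb1 : Rabs (b1 - c1) <= rho).
  { unfold b1. replace (c1 + m * (a1 - c1) - c1) with (m * (a1 - c1)) by ring. rewrite Rabs_mult, Rabs_right by lra. nra. }
  assert (bb2 : Rabs (b2 - c2) <= rho).
  { unfold b2. replace (c2 + m * (a2 - c2) - c2) with (m * (a2 - c2)) by ring. rewrite Rabs_mult, Rabs_right by lra. nra. }
  assert (bbe : Rabs (b1 - c1) = rho \/ Rabs (b2 - c2) = rho).
  { unfold b1, b2. replace (c1 + m * (a1 - c1) - c1) with (m * (a1 - c1)) by ring.
    replace (c2 + m * (a2 - c2) - c2) with (m * (a2 - c2)) by ring. rewrite !Rabs_mult, !Rabs_right by lra.
    unfold s, Rmax in ms. destruct Rle_dec in ms; [right|left]; lra. }
  rewrite <- (side b1 b2 bb1 bb2 bbe).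
  apply (seg_same k c1 c2 r); [lra|exact HU|].
  intros t Ht.
  assert (L : forall ai ci, Rabs (ai - ci) <= s -> ai + t * (ci + m * (ai - ci) - ai) - ci = (1 + t * (m - 1)) * (ai - ci)) by (intros; ring).
  unfold b1, b2. rewrite !L by auto. rewrite !Rabs_mult. rewrite (Rabs_right (1 + t * (m - 1))) by nra.
  split; [|split].
  - assert ((1 + t * (m - 1)) * Rabs (a1 - c1) <= (1 + t * (m - 1)) * s) by (apply Rmult_le_compat_l; nra).
    assert ((1 + t * (m - 1)) * s <= rho) by nra. lra.
  - assert ((1 + t * (m - 1)) * Rabs (a2 - c2) <= (1 + t * (m - 1)) * s) by (apply Rmult_le_compat_l; nra).
    assert ((1 + t * (m - 1)) * s <= rho) by nra. lra.
  - intros [e1 e2]. apply Hn.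
    assert (l0 : 1 + t * (m - 1) <> 0) by nra.
    split.
    + assert (E : (1 + t * (m - 1)) * (a1 - c1) = 0) by (rewrite <- L; [lra|auto]).
      apply Rmult_integral in E; destruct E; [contradiction|lra].
    + assert (E : (1 + t * (m - 1)) * (a2 - c2) = 0) by (rewrite <- L; [lra|auto]).
      apply Rmult_integral in E; destruct E; [contradiction|lra].
Qed.
End Geo.

Lemma no_open_square k c1 c2 r : r > 0 -> ~ (forall z1 z2, Rabs (z1 - c1) < r -> Rabs (z2 - c2) < r -> Kk k z1 z2).
Proof.
  intros Hr HU. set (t := G c1 c2). destruct (GP c1 c2) as [g1 g2]. fold t in g1, g2.
  destruct (Hc t (r/2) ltac:(lra)) as [d [Hd K]].
  assert (Ha := K (t - d/2) ltac:(rewrite Rabs_left; lra)).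
  assert (Hb := K (t + d/2) ltac:(rewrite Rabs_right; lra)).
  rewrite g1, g2 in Ha, Hb. destruct Ha as [ha1 ha2]; destruct Hb as [hb1 hb2].
  assert (Na : ~ (F1 (t - d/2) = c1 /\ F2 (t - d/2) = c2)).
  { intros [e1 e2]. rewrite <- g1 in e1; rewrite <- g2 in e2. pose proof (Hinj _ _ e1 e2). lra. }
  assert (Nb : ~ (F1 (t + d/2) = c1 /\ F2 (t + d/2) = c2)).
  { intros [e1 e2]. rewrite <- g1 in e1; rewrite <- g2 in e2. pose proof (Hinj _ _ e1 e2). lra. }
  pose proof (ray k c1 c2 r (r/2) ltac:(lra) HU _ _ ha1 ha2 Na) as Ra.
  pose proof (ray k c1 c2 r (r/2) ltac:(lra) HU _ _ hb1 hb2 Nb) as Rb.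
  rewrite !G_F in Ra, Rb. fold t in Ra, Rb.
  destruct Ra as [Ra _]; destruct Rb as [_ Rb]. specialize (Ra ltac:(lra)). specialize (Rb Ra). lra.
Qed.

Lemma baire : exists k : nat, exists c1 c2 r, r > 0 /\ forall z1 z2, Rabs (z1 - c1) < r -> Rabs (z2 - c2) < r -> Kk (INR k) z1 z2.
Proof.
  apply NNPP; intro Hno.
  assert (Hstep : forall (k : nat) (s : R*R*R), exists s' : R*R*R, snd s > 0 -> snd s' > 0 /\
     Rabs (fst (fst s') - fst (fst s)) + snd s' <= snd s /\ Rabs (snd (fst s') - snd (fst s)) + snd s' <= snd s /\
     forall z1 z2, Rabs (z1 - fst (fst s')) <= snd s' -> Rabs (z2 - snd (fst s')) <= snd s' -> ~ Kk (INR k) z1 z2).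
  { intros k [[c1 c2] r]. simpl. destruct (Rlt_dec 0 r) as [Hr|Hr]; [| exists (0,0,0); intros; lra].
    assert (Hn : ~ (forall z1 z2, Rabs (z1 - c1) < r -> Rabs (z2 - c2) < r -> Kk (INR k) z1 z2)).
    { intro H. apply Hno. exists k, c1, c2, r. split; auto. }
    apply not_all_ex_not in Hn. destruct Hn as [z1 Hn]. apply not_all_ex_not in Hn. destruct Hn as [z2 Hn].
    apply imply_to_and in Hn. destruct Hn as [Hz1 Hn]. apply imply_to_and in Hn. destruct Hn as [Hz2 Hn].
    destruct (minsep (- INR k) (INR k) z1 z2) as [e [He K]].
    { intros x Hx [e1 e2]. apply Hn. exists x. auto. }
    set (r' := Rmin (e/2) (Rmin ((r - Rabs (z1 - c1))/2) ((r - Rabs (z2 - c2))/2))).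
    assert (r1 : r' <= e/2) by apply Rmin_l.
    assert (r2 : r' <= (r - Rabs (z1 - c1))/2) by (eapply Rle_trans; [apply Rmin_r| apply Rmin_l]).
    assert (r3 : r' <= (r - Rabs (z2 - c2))/2) by (eapply Rle_trans; [apply Rmin_r| apply Rmin_r]).
    assert (r0 : r' > 0) by (unfold r'; repeat apply Rmin_glb_lt; lra).
    exists (z1, z2, r'). simpl. intros _. split; [auto|split; [lra|split; [lra|]]].
    intros w1 w2 hw1 hw2 [x [Hx [e1 e2]]]. subst w1 w2.
    destruct (K x Hx) as [k1|k1]; lra. }
  set (stp := fun k s => proj1_sig (constructive_indefinite_description _ (Hstep k s))).
  assert (Hstp : forall k s, snd s > 0 -> snd (stp k s) > 0 /\
     Rabs (fst (fst (stp k s)) - fst (fst s)) + snd (stp k s) <= snd s /\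
     Rabs (snd (fst (stp k s)) - snd (fst s)) + snd (stp k s) <= snd s /\
     forall z1 z2, Rabs (z1 - fst (fst (stp k s))) <= snd (stp k s) -> Rabs (z2 - snd (fst (stp k s))) <= snd (stp k s) -> ~ Kk (INR k) z1 z2).
  { intros k s. unfold stp. destruct constructive_indefinite_description as [s' Hs']. simpl. exact Hs'. }
  set (sq := fix sq (k : nat) : R*R*R := match k with O => (0,0,1) | S k' => stp k' (sq k') end).
  assert (Hpos : forall k, snd (sq k) > 0).
  { induction k as [|k IH]; simpl; [lra|]. apply Hstp; auto. }
  assert (Hn : forall k, snd (sq (S k)) > 0 /\
     Rabs (fst (fst (sq (S k))) - fst (fst (sq k))) + snd (sq (S k)) <= snd (sq k) /\
     Rabs (snd (fst (sq (S k))) - snd (fst (sq k))) + snd (sq (S k)) <= snd (sq k) /\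
     forall z1 z2, Rabs (z1 - fst (fst (sq (S k)))) <= snd (sq (S k)) -> Rabs (z2 - snd (fst (sq (S k)))) <= snd (sq (S k)) -> ~ Kk (INR k) z1 z2).
  { intro k. apply Hstp, Hpos. }
  destruct (nested_point (fun k => fst (fst (sq k)) - snd (sq k)) (fun k => fst (fst (sq k)) + snd (sq k))) as [l1 Hl1].
  { intro k; destruct (Hn k) as [_ [h _]]; unfold Rabs in *; repeat destruct Rcase_abs; lra. }
  { intro k; destruct (Hn k) as [_ [h _]]; unfold Rabs in *; repeat destruct Rcase_abs; lra. }
  { intro k; pose proof (Hpos k); lra. }
  destruct (nested_point (fun k => snd (fst (sq k)) - snd (sq k)) (fun k => snd (fst (sq k)) + snd (sq k))) as [l2 Hl2].
  { intro k; destruct (Hn k) as [_ [_ [h _]]]; unfold Rabs in *; repeat destruct Rcase_abs; lra. }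
  { intro k; destruct (Hn k) as [_ [_ [h _]]]; unfold Rabs in *; repeat destruct Rcase_abs; lra. }
  { intro k; pose proof (Hpos k); lra. }
  destruct (Hsurj l1 l2) as [x [e1 e2]].
  destruct (INR_unbounded (Rabs x)) as [k Hk].
  destruct (Hn k) as [_ [_ [_ Hav]]]. apply (Hav l1 l2).
  - specialize (Hl1 (S k)). apply Rabs_le; lra.
  - specialize (Hl2 (S k)). apply Rabs_le; lra.
  - exists x. split; [|auto]. apply Rabs_le_inv'. lra.
Qed.

Lemma case1_false : False.
Proof.
  destruct baire as [k [c1 [c2 [r [Hr HU]]]]]. exact (no_open_square _ _ _ _ Hr HU).
Qed.
End Case1.

Lemma fin1_ext (u : Rn 1) : u = (fun _ => u Fin.F1).
Proof.
  apply functional_extensionality. intro i. apply (Fin.caseS' i); auto. intro q. apply (Fin.case0 (fun _ => _) q).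
Qed.

Lemma dist1 x y : euclid_dist 1 (fun _ => x) (fun _ => y) = Rabs (x - y).
Proof. unfold euclid_dist. simpl. rewrite Rplus_0_r, Rmult_1_r. apply sqrt_Rsqr_abs. Qed.

Theorem theorem4 (n : nat) (hn : (0 < n)%nat) (hn2 : n <> 2%nat) :
  ~ exists f : Rn n -> Rn 2, continuous_Rn n 2 f /\ bijective_map f.
Proof.
  intros [f [Hcont [Hinj Hsurj]]].
  destruct n as [|[|[|m]]]; [lia| | lia |].
  - apply (case1_false (fun x => f (fun _ => x) Fin.F1) (fun x => f (fun _ => x) (Fin.FS Fin.F1))).
    + intros x eps He. destruct (Hcont (fun _ => x) eps He) as [d [Hd K]].
      exists d; split; auto. intros y Hy. rewrite Rabs_minus_sym in Hy. rewrite <- dist1 in Hy.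
      specialize (K _ Hy). destruct (dist2_coords (f (fun _ => x)) (f (fun _ => y))) as [c1 c2].
      rewrite !(Rabs_minus_sym (f (fun _ => y) _)). split; lra.
    + intros x y e1 e2. assert (E : (fun _ : Fin.t 1 => x) = (fun _ => y)) by (apply Hinj; apply fin2_ext; auto).
      exact (f_equal (fun g => g Fin.F1) E).
    + intros p1 p2. destruct (Hsurj (vcons p1 (vcons p2 (fun _ => 0)))) as [a Ha].
      exists (a Fin.F1). rewrite <- fin1_ext, Ha. split; reflexivity.
  - exact (case_ge3 m f Hcont Hinj).
Qed.
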